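(* Let $H \geq 1$ be a real number, let $m = p/q$ be a rational number with $p, q$ integers and $q > 0$, and let $c_1, c_2, c_3$ be integers with $c_1 \neq 0$, $c_3 \geq 0$ and $(c_1, c_2) = 1$. Suppose that there are at least three integer points $(x,y) \in \mathbb{Z}^2$ with $|x| \leq H$, $|y| \leq H$ lying on the circle \[ (c_1 X - c_2)^2 + (c_1 Y - m c_2)^2 = c_3 . \] Then \[ |c_1| \leq 4q(1+|m|)H, \qquad |c_2| \leq 2qH^2, \qquad c_3 \leq 36 q^2 (1+|m|)^2 H^4 . \]
   Context: For integers $a, b$, the notation $(a,b) = 1$ means: either one of $a, b$ equals $1$ and the other equals $0$, or $a$ and $b$ are both nonzero and coprime. *)

(* Defs.v *)
From Stdlib Require Import Reals ZArith.
Open Scope R_scope.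

(* The paper's convention: (a,b) = 1 means either one of a, b equals 1 and
   the other equals 0, or a and b are both nonzero and coprime. *)
Definition coprime_pair (a b : Z) : Prop :=
  ((a = 1 /\ b = 0) \/ (a = 0 /\ b = 1))%Z \/
  (a <> 0%Z /\ b <> 0%Z /\ Z.gcd a b = 1%Z).

Definition on_circle (m : R) (c1 c2 c3 : Z) (x y : Z) : Prop :=
  (IZR c1 * IZR x - IZR c2) ^ 2 + (IZR c1 * IZR y - m * IZR c2) ^ 2 = IZR c3.

Definition in_box (H : R) (x y : Z) : Prop :=
  Rabs (IZR x) <= H /\ Rabs (IZR y) <= H.

(* Main.v *)
Require Import Defs.
From Stdlib Require Import Reals ZArith Znumtheory Lia Lra Psatz.
Open Scope R_scope.

Local Open Scope Z_scope.
Definition Ez (p q c1 c2 c3 x y : Z) : Prop :=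
  (q*c1*x - q*c2)^2 + (q*c1*y - p*c2)^2 = q^2*c3.
Lemma relZ p q c1 c2 c3 x y X Y : q <> 0 -> c1 <> 0 ->
  Ez p q c1 c2 c3 x y -> Ez p q c1 c2 c3 X Y ->
  q*c1*(x^2+y^2-X^2-Y^2) = 2*c2*(q*(x-X)+p*(y-Y)).
Proof.
  unfold Ez; intros hq hc E1 E2.
  assert (H0 : (q*c1) * (q*c1*(x^2+y^2-X^2-Y^2) - 2*c2*(q*(x-X)+p*(y-Y))) = 0).
  { transitivity (((q*c1*x - q*c2)^2 + (q*c1*y - p*c2)^2) - ((q*c1*X - q*c2)^2 + (q*c1*Y - p*c2)^2)).
    ring. rewrite E1, E2. ring. }
  apply Z.mul_eq_0 in H0. destruct H0 as [H0|H0]. apply Z.mul_eq_0 in H0; destruct H0; contradiction.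
  apply Zminus_eq; exact H0.
Qed.
Lemma c1boundZ p q c1 c2 c3 x y X Y : q <> 0 -> c1 <> 0 -> Z.gcd c1 c2 = 1 ->
  Ez p q c1 c2 c3 x y -> Ez p q c1 c2 c3 X Y ->
  q*(x-X)+p*(y-Y) <> 0 ->
  Z.abs c1 <= 2 * Z.abs (q*(x-X)+p*(y-Y)).
Proof.
  intros hq hc hg E1 E2 hL.
  pose proof (relZ p q c1 c2 c3 x y X Y hq hc E1 E2) as R. clear E1 E2.
  set (L := q*(x-X)+p*(y-Y)) in *. set (D := x^2+y^2-X^2-Y^2) in *.
  assert (Hd : (c1 | c2 * (2*L))).
  { exists (q*D). rewrite Z.mul_assoc, (Z.mul_comm c2 2), <- R. ring. }
  apply Gauss in Hd; [| apply Zgcd_1_rel_prime; exact hg].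
  apply Zdivide_bounds in Hd; [| clearbody L; lia].
  rewrite Z.abs_mul in Hd. exact Hd.
Qed.

Lemma c2boundZ p q c1 c2 c3 x y X Y : 0 < q -> c1 <> 0 -> Z.gcd c1 c2 = 1 ->
  Ez p q c1 c2 c3 x y -> Ez p q c1 c2 c3 X Y ->
  x^2+y^2-X^2-Y^2 <> 0 ->
  Z.abs c2 <= q * Z.abs (x^2+y^2-X^2-Y^2).
Proof.
  intros hq hc hg E1 E2 hL.
  pose proof (relZ p q c1 c2 c3 x y X Y ltac:(lia) hc E1 E2) as R. clear E1 E2.
  set (L := q*(x-X)+p*(y-Y)) in *. set (D := x^2+y^2-X^2-Y^2) in *.
  assert (Hd : (c2 | c1 * (q*D))).
  { exists (2*L). rewrite Z.mul_assoc, (Z.mul_comm c1 q), R. ring. }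
  apply Gauss in Hd; [| apply Zgcd_1_rel_prime; rewrite Z.gcd_comm; exact hg].
  apply Zdivide_bounds in Hd.
  - rewrite Z.abs_mul in Hd. rewrite (Z.abs_eq q) in Hd by lia. exact Hd.
  - intro Z0. apply Z.mul_eq_0 in Z0. destruct Z0; [lia| contradiction].
Qed.

Lemma c3boundZ p q c1 c2 c3 x y X Y : 0 < q -> c1 <> 0 -> Z.gcd c1 c2 = 1 ->
  Ez p q c1 c2 c3 x y -> Ez p q c1 c2 c3 X Y ->
  q*(x-X)+p*(y-Y) <> 0 ->
  c3 <= ((x-X)^2+(y-Y)^2)*((q*(y+Y)-p*(x+X))^2+(q*(x-X)+p*(y-Y))^2).
Proof.
  intros hq hc hg E1 E2 hL.
  pose proof (relZ p q c1 c2 c3 x y X Y ltac:(lia) hc E1 E2) as R.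
  pose proof (c1boundZ p q c1 c2 c3 x y X Y ltac:(lia) hc hg E1 E2 hL) as B.
  clear E2.
  set (L := q*(x-X)+p*(y-Y)) in *. set (D := x^2+y^2-X^2-Y^2) in *.
  assert (I : ((x-X)^2+(y-Y)^2)*((q*(y+Y)-p*(x+X))^2+L^2) = (2*L*x-D*q)^2+(2*L*y-D*p)^2).
  { unfold L, D. ring. }
  rewrite I. 
  assert (K : q^2 * (4*L^2*c3) = q^2 * (c1^2 * ((2*L*x-D*q)^2+(2*L*y-D*p)^2))).
  { unfold Ez in E1. transitivity (4*L^2*(q^2*c3)). ring. rewrite <- E1.
    transitivity ((2*L*(q*c1*x) - q*(2*c2*L))^2 + (2*L*(q*c1*y) - p*(2*c2*L))^2). ring.
    rewrite <- R. ring. }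
  clear E1 I R.
  set (Wsq := (2*L*x-D*q)^2+(2*L*y-D*p)^2) in *.
  assert (W0 : 0 <= Wsq) by (unfold Wsq; clearbody L D; nia).
  clearbody Wsq L D.
  apply Z.mul_reg_l in K; [| nia].
  assert (C : c1^2 <= 4*L^2).
  { replace (c1^2) with (Z.abs c1 * Z.abs c1) by (rewrite Z.abs_square; ring).
    replace (L^2) with (Z.abs L * Z.abs L) by (rewrite Z.abs_square; ring).
    pose proof (Z.abs_nonneg c1). nia. }
  assert (L2 : 0 < 4*L^2) by nia.
  nia.
Qed.
Lemma cross0 p q x1 y1 x2 y2 : (x1,y1) <> (x2,y2) ->
  q*(x1-x2)+p*(y1-y2) = 0 -> x1^2+y1^2-x2^2-y2^2 = 0 ->
  q*(y1+y2) - p*(x1+x2) = 0.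
Proof.
  intros hne hL hD.
  assert (A : (q*(y1+y2) - p*(x1+x2)) * (x1-x2) = 0).
  { transitivity ((q*(x1-x2)+p*(y1-y2))*(y1+y2) - (x1^2+y1^2-x2^2-y2^2)*p). ring.
    rewrite hL, hD. ring. }
  assert (B : (q*(y1+y2) - p*(x1+x2)) * (y1-y2) = 0).
  { transitivity (-((q*(x1-x2)+p*(y1-y2))*(x1+x2) - (x1^2+y1^2-x2^2-y2^2)*q)). ring.
    rewrite hL, hD. ring. }
  clear hL hD.
  apply Z.mul_eq_0 in A. apply Z.mul_eq_0 in B.
  destruct A as [A|A]; [exact A|]. destruct B as [B|B]; [exact B|].
  exfalso; apply hne. f_equal; lia.
Qed.

Lemma nondeg p q c1 c2 c3 x1 y1 x2 y2 x3 y3 : 0 < q -> c1 <> 0 ->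
  (x1,y1) <> (x2,y2) -> (x1,y1) <> (x3,y3) -> (x2,y2) <> (x3,y3) ->
  Ez p q c1 c2 c3 x1 y1 -> Ez p q c1 c2 c3 x2 y2 -> Ez p q c1 c2 c3 x3 y3 ->
  q*(x1-x2)+p*(y1-y2) = 0 -> q*(x1-x3)+p*(y1-y3) = 0 -> False.
Proof.
  intros hq hc n12 n13 n23 E1 E2 E3 L12 L13.
  pose proof (relZ p q c1 c2 c3 x1 y1 x2 y2 ltac:(lia) hc E1 E2) as R12.
  pose proof (relZ p q c1 c2 c3 x1 y1 x3 y3 ltac:(lia) hc E1 E3) as R13.
  clear E1 E2 E3.
  rewrite L12, Z.mul_0_r in R12. rewrite L13, Z.mul_0_r in R13.
  apply Z.mul_eq_0 in R12. apply Z.mul_eq_0 in R13.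
  assert (D12 : x1^2+y1^2-x2^2-y2^2 = 0).
  { destruct R12 as [R|R]; [apply Z.mul_eq_0 in R; lia| exact R]. }
  assert (D13 : x1^2+y1^2-x3^2-y3^2 = 0).
  { destruct R13 as [R|R]; [apply Z.mul_eq_0 in R; lia| exact R]. }
  pose proof (cross0 p q x1 y1 x2 y2 n12 L12 D12) as C12.
  pose proof (cross0 p q x1 y1 x3 y3 n13 L13 D13) as C13.
  clear R12 R13 D12 D13.
  assert (E : (q*q+p*p)*(x2-x3) = 0).
  { transitivity (q*((q*(x1-x3)+p*(y1-y3)) - (q*(x1-x2)+p*(y1-y2))) - p*((q*(y1+y2) - p*(x1+x2)) - (q*(y1+y3) - p*(x1+x3)))). ring.
    rewrite L12, L13, C12, C13. ring. }
  apply Z.mul_eq_0 in E. destruct E as [E|E]; [nia|].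
  assert (F : q*(y2-y3) = 0) by lia.
  apply Z.mul_eq_0 in F. apply n23. f_equal; lia.
Qed.
Local Open Scope R_scope.
Lemma absb r H : Rabs r <= H -> -H <= r <= H.
Proof. unfold Rabs; destruct (Rcase_abs r); lra. Qed.

Lemma sqb r H : -H <= r <= H -> r^2 <= H^2.
Proof. intros; nra. Qed.

Lemma mixb q p P a b : 0 <= q -> P = Rabs p ->
  (q*a + p*b)^2 <= (q+P)*(q*a^2 + P*b^2).
Proof.
  intros hq hP. subst P. unfold Rabs; destruct (Rcase_abs p).
  - assert (0 <= q*(-p)*(a+b)^2) by (apply Rmult_le_pos; [apply Rmult_le_pos; lra | apply pow2_ge_0]). nra.
  - assert (0 <= q*p*(a-b)^2) by (apply Rmult_le_pos; [apply Rmult_le_pos; lra | apply pow2_ge_0]). nra.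
Qed.

Lemma amgm a b H : 0 <= a <= 4*H^2 -> 0 <= b <= 4*H^2 ->
  (a+b)*(4*H^2+a-b) <= 36*H^4.
Proof. intros.
  assert (0 <= (a+b) - (4*H^2+a-b) + 0 \/ True) by auto.
  pose proof (pow2_ge_0 ((a+b) - (4*H^2+a-b))).
  assert (hs : 0 <= (a+b) + (4*H^2+a-b) <= 12*H^2) by lra.
  assert (((a+b) + (4*H^2+a-b))^2 <= (12*H^2)^2).
  { apply pow_incr. exact hs. }
  nra. Qed.

Lemma keyR (H q p x y X Y : R) : 0 <= q ->
  -H <= x <= H -> -H <= y <= H -> -H <= X <= H -> -H <= Y <= H ->
  ((x-X)^2+(y-Y)^2)*((q*(y+Y)-p*(x+X))^2+(q*(x-X)+p*(y-Y))^2)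
   <= 36*(q+Rabs p)^2*H^4.
Proof.
  intros hq bx by' bX bY.
  set (P := Rabs p). assert (hP0 : 0 <= P) by apply Rabs_pos.
  set (dx := x-X). set (dy := y-Y). set (sx := x+X). set (sy := y+Y).
  assert (h1 : (q*sy - p*sx)^2 <= (q+P)*(q*sy^2 + P*sx^2)).
  { replace (q*sy - p*sx) with (q*sy + p*(-sx)) by ring.
    replace (sx^2) with ((-sx)^2) by ring. apply mixb; auto. }
  assert (h2 : (q*dx + p*dy)^2 <= (q+P)*(q*dx^2 + P*dy^2)) by (apply mixb; auto).
  assert (ex : sx^2 + dx^2 <= 4*H^2).
  { pose proof (sqb x H bx); pose proof (sqb X H bX). unfold sx, dx. nra. }
  assert (ey : sy^2 + dy^2 <= 4*H^2).
  { pose proof (sqb y H by'); pose proof (sqb Y H bY). unfold sy, dy. nra. }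
  assert (a0 : 0 <= dx^2) by nra. assert (b0 : 0 <= dy^2) by nra.
  assert (s0 : 0 <= sx^2) by nra. assert (t0 : 0 <= sy^2) by nra.
  clearbody dx dy sx sy.
  assert (f1 : (dx^2+dy^2)*(4*H^2+dx^2-dy^2) <= 36*H^4) by (apply amgm; lra).
  assert (f2 : (dy^2+dx^2)*(4*H^2+dy^2-dx^2) <= 36*H^4) by (apply amgm; lra).
  set (a := dx^2) in *. set (b := dy^2) in *. set (u := sx^2) in *. set (v := sy^2) in *.
  clearbody a b u v.
  assert (g : (q*sy - p*sx)^2 + (q*dx + p*dy)^2 <= (q+P)*(q*(v+a) + P*(u+b))) by nra.
  assert (g2 : (q*(v+a) + P*(u+b)) <= q*(4*H^2-b+a) + P*(4*H^2-a+b)) by nra.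
  assert (hq2 : 0 <= (a+b)*(q+P)) by nra.
  apply Rle_trans with ((a+b)*((q+P)*(q*(4*H^2-b+a) + P*(4*H^2-a+b)))).
  { apply Rmult_le_compat_l; [lra|]. apply Rle_trans with ((q+P)*(q*(v+a) + P*(u+b))); [exact g|].
    apply Rmult_le_compat_l; lra. }
  replace ((a+b)*((q+P)*(q*(4*H^2-b+a) + P*(4*H^2-a+b)))) with
    ((q+P)*(q*((a+b)*(4*H^2+a-b)) + P*((b+a)*(4*H^2+b-a)))) by ring.
  replace (36*(q+P)^2*H^4) with ((q+P)*(q*(36*H^4) + P*(36*H^4))) by ring.
  apply Rmult_le_compat_l; [lra|].
  apply Rplus_le_compat; apply Rmult_le_compat_l; lra.
Qed.

Ltac pushZ := repeat rewrite ?Z.pow_2_r, ?plus_IZR, ?minus_IZR, ?mult_IZR, ?opp_IZR.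

Lemma circZ p q c1 c2 c3 x y : (0 < q)%Z ->
  on_circle (IZR p / IZR q) c1 c2 c3 x y -> Ez p q c1 c2 c3 x y.
Proof.
  intros hq E. unfold on_circle in E. unfold Ez. apply eq_IZR. pushZ.
  assert (hq' : IZR q <> 0) by (apply not_0_IZR; lia).
  rewrite <- E. field. exact hq'.
Qed.

Lemma m_eq p q : (0 < q)%Z ->
  IZR q * (1 + Rabs (IZR p / IZR q)) = IZR q + Rabs (IZR p).
Proof.
  intros hq. assert (hq' : 0 < IZR q) by (apply IZR_lt; lia).
  unfold Rdiv. rewrite Rabs_mult, Rabs_inv, (Rabs_pos_eq (IZR q)) by lra.
  field. lra.
Qed.

Definition rbox (H : R) (x y : Z) := -H <= IZR x <= H /\ -H <= IZR y <= H.

Lemma R_c1 H p q c1 c2 c3 x y X Y : (0 < q)%Z -> c1 <> 0%Z -> Z.gcd c1 c2 = 1%Z ->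
  Ez p q c1 c2 c3 x y -> Ez p q c1 c2 c3 X Y -> rbox H x y -> rbox H X Y ->
  (q*(x-X)+p*(y-Y) <> 0)%Z ->
  Rabs (IZR c1) <= 4 * IZR q * (1 + Rabs (IZR p / IZR q)) * H.
Proof.
  intros hq hc hg E1 E2 [bx by'] [bX bY] hL.
  pose proof (c1boundZ p q c1 c2 c3 x y X Y ltac:(lia) hc hg E1 E2 hL) as B.
  clear E1 E2.
  assert (B2 : (Z.abs c1 <= 2*(q*Z.abs (x-X) + Z.abs p * Z.abs (y-Y)))%Z).
  { pose proof (Z.abs_triangle (q*(x-X)) (p*(y-Y))).
    rewrite !Z.abs_mul, (Z.abs_eq q) in H0 by lia. lia. }
  apply IZR_le in B2. repeat rewrite ?mult_IZR, ?plus_IZR, ?abs_IZR, ?minus_IZR in B2.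
  replace (4 * IZR q * (1 + Rabs (IZR p / IZR q)) * H) with (4*(IZR q + Rabs (IZR p))*H)
    by (rewrite <- (m_eq p q hq); ring).
  assert (a1 : Rabs (IZR x - IZR X) <= 2*H) by (apply Rabs_le; lra).
  assert (a2 : Rabs (IZR y - IZR Y) <= 2*H) by (apply Rabs_le; lra).
  assert (hq' : 0 < IZR q) by (apply IZR_lt; lia).
  pose proof (Rabs_pos (IZR p)).
  nra.
Qed.

Lemma R_c3 H p q c1 c2 c3 x y X Y : (0 < q)%Z -> c1 <> 0%Z -> Z.gcd c1 c2 = 1%Z ->
  Ez p q c1 c2 c3 x y -> Ez p q c1 c2 c3 X Y -> rbox H x y -> rbox H X Y ->
  (q*(x-X)+p*(y-Y) <> 0)%Z ->
  IZR c3 <= 36 * IZR q ^ 2 * (1 + Rabs (IZR p / IZR q)) ^ 2 * H ^ 4.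
Proof.
  intros hq hc hg E1 E2 [bx by'] [bX bY] hL.
  pose proof (c3boundZ p q c1 c2 c3 x y X Y hq hc hg E1 E2 hL) as B.
  clear E1 E2.
  apply IZR_le in B.
  replace (36 * IZR q ^ 2 * (1 + Rabs (IZR p / IZR q)) ^ 2 * H ^ 4) with
    (36*(IZR q + Rabs (IZR p))^2*H^4) by (rewrite <- (m_eq p q hq); ring).
  eapply Rle_trans; [exact B|].
  assert (hq' : 0 <= IZR q) by (apply IZR_le; lia).
  pose proof (keyR H (IZR q) (IZR p) (IZR x) (IZR y) (IZR X) (IZR Y) hq' bx by' bX bY) as K.
  eapply Rle_trans; [|exact K]. right. pushZ. ring.
Qed.

Lemma R_c2 H p q c1 c2 c3 x y X Y : (0 < q)%Z -> c1 <> 0%Z -> Z.gcd c1 c2 = 1%Z ->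
  Ez p q c1 c2 c3 x y -> Ez p q c1 c2 c3 X Y -> rbox H x y -> rbox H X Y ->
  (x^2+y^2-X^2-Y^2 <> 0)%Z ->
  Rabs (IZR c2) <= 2 * IZR q * H ^ 2.
Proof.
  intros hq hc hg E1 E2 [bx by'] [bX bY] hL.
  pose proof (c2boundZ p q c1 c2 c3 x y X Y hq hc hg E1 E2 hL) as B.
  clear E1 E2.
  apply IZR_le in B. rewrite mult_IZR, !abs_IZR in B.
  assert (hD : Rabs (IZR (x^2+y^2-X^2-Y^2)) <= 2*H^2).
  { pushZ. apply Rabs_le.
    pose proof (sqb _ _ bx). pose proof (sqb _ _ by'). pose proof (sqb _ _ bX). pose proof (sqb _ _ bY).
    split; nra. }
  assert (hq' : 0 < IZR q) by (apply IZR_lt; lia).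
  nra.
Qed.

Lemma box_r H x y : in_box H x y -> rbox H x y.
Proof. intros [a b]. split; apply absb; assumption. Qed.

Theorem proposition1 (H : R) (p q c1 c2 c3 : Z)
  (hH : 1 <= H) (hq : (0 < q)%Z)
  (hc1 : c1 <> 0%Z) (hc3 : (0 <= c3)%Z) (hcop : coprime_pair c1 c2)
  (h3 : exists (x1 y1 x2 y2 x3 y3 : Z),
      (x1, y1) <> (x2, y2) /\ (x1, y1) <> (x3, y3) /\ (x2, y2) <> (x3, y3) /\
      in_box H x1 y1 /\ in_box H x2 y2 /\ in_box H x3 y3 /\
      on_circle (IZR p / IZR q) c1 c2 c3 x1 y1 /\
      on_circle (IZR p / IZR q) c1 c2 c3 x2 y2 /\
      on_circle (IZR p / IZR q) c1 c2 c3 x3 y3) :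
  let m := IZR p / IZR q in
  Rabs (IZR c1) <= 4 * IZR q * (1 + Rabs m) * H /\
  Rabs (IZR c2) <= 2 * IZR q * H ^ 2 /\
  IZR c3 <= 36 * IZR q ^ 2 * (1 + Rabs m) ^ 2 * H ^ 4.
Proof.
  intros m. unfold m.
  destruct h3 as (x1 & y1 & x2 & y2 & x3 & y3 & n12 & n13 & n23 & b1 & b2 & b3 & o1 & o2 & o3).
  apply circZ in o1; [|exact hq]. apply circZ in o2; [|exact hq]. apply circZ in o3; [|exact hq].
  apply box_r in b1. apply box_r in b2. apply box_r in b3.
  assert (hg : Z.gcd c1 c2 = 1%Z).
  { destruct hcop as [[[-> ->]|[-> ->]]|(_ & _ & g)]; [reflexivity|contradiction|exact g]. }
  assert (PL : exists x y X Y, Ez p q c1 c2 c3 x y /\ Ez p q c1 c2 c3 X Y /\ rbox H x y /\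
     rbox H X Y /\ (q*(x-X)+p*(y-Y) <> 0)%Z).
  { destruct (Z.eq_dec (q*(x1-x2)+p*(y1-y2)) 0) as [z12|z12].
    - destruct (Z.eq_dec (q*(x1-x3)+p*(y1-y3)) 0) as [z13|z13].
      + exfalso. exact (nondeg p q c1 c2 c3 x1 y1 x2 y2 x3 y3 hq hc1 n12 n13 n23 o1 o2 o3 z12 z13).
      + exists x1, y1, x3, y3; auto.
    - exists x1, y1, x2, y2; auto. }
  destruct PL as (x & y & X & Y & E1 & E2 & bA & bB & hL).
  split; [|split].
  - exact (R_c1 H p q c1 c2 c3 x y X Y hq hc1 hg E1 E2 bA bB hL).
  - destruct (Z.eq_dec c2 0) as [z|z].
    + subst c2. rewrite Rabs_R0. assert (0 < IZR q) by (apply IZR_lt; lia). nra.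
    + destruct (Z.eq_dec (x1^2+y1^2-x2^2-y2^2) 0) as [d12|d12].
      * destruct (Z.eq_dec (x1^2+y1^2-x3^2-y3^2) 0) as [d13|d13].
        -- exfalso.
           pose proof (relZ p q c1 c2 c3 x1 y1 x2 y2 ltac:(lia) hc1 o1 o2) as R12.
           pose proof (relZ p q c1 c2 c3 x1 y1 x3 y3 ltac:(lia) hc1 o1 o3) as R13.
           rewrite d12, Z.mul_0_r in R12. rewrite d13, Z.mul_0_r in R13.
           symmetry in R12, R13.
           apply Z.mul_eq_0 in R12. apply Z.mul_eq_0 in R13.
           destruct R12 as [R12|R12]; [apply Z.mul_eq_0 in R12; destruct R12 as [R12|R12]; [discriminate|contradiction]|].
           destruct R13 as [R13|R13]; [apply Z.mul_eq_0 in R13; destruct R13 as [R13|R13]; [discriminate|contradiction]|].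
           exact (nondeg p q c1 c2 c3 x1 y1 x2 y2 x3 y3 hq hc1 n12 n13 n23 o1 o2 o3 R12 R13).
        -- exact (R_c2 H p q c1 c2 c3 x1 y1 x3 y3 hq hc1 hg o1 o3 b1 b3 d13).
      * exact (R_c2 H p q c1 c2 c3 x1 y1 x2 y2 hq hc1 hg o1 o2 b1 b2 d12).
  - exact (R_c3 H p q c1 c2 c3 x y X Y hq hc1 hg E1 E2 bA bB hL).
Qed.
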